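(* If $\mathcal F=(A,X,f)$ and $\mathcal G=(B,X,g)$ are complete D3-directable fuzzy automata, then their direct product $\mathcal F\times\mathcal G$ is D3-directable.
   Context: A fuzzy automaton is a triple $\mathcal F=(A,X,f)$ with $A$ a finite nonempty set of states, $X$ a finite nonempty alphabet, and $f:A\times X\times A\to[0,1]$, extended to words by $f^*(a,\varepsilon,a)=1$, $f^*(a,\varepsilon,b)=0$ ($b\neq a$), $f^*(a,vx,b)=\max_{c\in A}\min\{f^*(a,v,c),f(c,x,b)\}$. Let $\mathcal F(a,w)=\{b\in A\mid f^*(a,w,b)>0\}$. $\mathcal F$ is complete if $\mathcal F(a,x)\neq\emptyset$ for all $a\in A$, $x\in X$. $\mathcal F$ is D3-directable if there are $w\in X^*$ and $c\in A$ with $c\in\mathcal F(a,w)$ for all $a\in A$. The direct product is $\mathcal F\times\mathcal G=(A\times B,X,h)$ with $h((a,b),x,(a',b'))=\min\{f(a,x,a'),g(b,x,b')\}$. *)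

(* Defs.v *)
From HB Require Import structures.
From mathcomp Require Import all_boot all_order all_algebra.
From mathcomp Require Import reals.
Set Implicit Arguments. Unset Strict Implicit. Unset Printing Implicit Defensive.
Import Order.TTheory GRing.Theory Num.Theory.
Local Open Scope ring_scope.

Record fuzzy_automaton (R : realType) (A X : finType) := FuzzyAutomaton {
  fa_trans :> A -> X -> A -> R;
  fa_range : forall a x b, 0 <= fa_trans a x b <= 1
}.

(* Extended transition function f^*, defined by
   f*(a, eps, b) = [a == b], f*(a, v x, b) = max_c min (f*(a,v,c), f(c,x,b)). *)
Fixpoint ext_trans_rev (R : realType) (A X : finType) (f : A -> X -> A -> R)
    (a : A) (rw : seq X) (b : A) : R :=
  match rw with
  | [::] => if a == b then 1 else 0
  | x :: rv => \big[Order.max/0]_(c : A) Order.min (ext_trans_rev f a rv c) (f c x b)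
  end.

(* f^*(a, w, b), words as seq X read left to right *)
Definition ext_trans (R : realType) (A X : finType) (f : A -> X -> A -> R)
    (a : A) (w : seq X) (b : A) : R := ext_trans_rev f a (rev w) b.

Definition reach (R : realType) (A X : finType) (f : A -> X -> A -> R)
    (a : A) (w : seq X) : {set A} := [set b | 0 < ext_trans f a w b].

Definition complete (R : realType) (A X : finType) (f : A -> X -> A -> R) : Prop :=
  forall (a : A) (x : X), reach f a [:: x] != set0.

Definition D3_directable (R : realType) (A X : finType) (f : A -> X -> A -> R) : Prop :=
  exists (w : seq X) (c : A), forall a : A, c \in reach f a w.

Definition prod_trans (R : realType) (A B X : finType)
    (f : A -> X -> A -> R) (g : B -> X -> B -> R) : (A * B)%type -> X -> (A * B)%type -> R :=
  fun p x q => Order.min (f p.1 x q.1) (g p.2 x q.2).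

Lemma prod_trans_range (R : realType) (A B X : finType)
    (F : fuzzy_automaton R A X) (G : fuzzy_automaton R B X) p x q :
  0 <= prod_trans F G p x q <= 1.
Proof.
rewrite /prod_trans; case/andP: (fa_range F p.1 x q.1) => h1 h2.
case/andP: (fa_range G p.2 x q.2) => h3 h4.
by rewrite le_min h1 h3 ge_min h2.
Qed.

Definition prod_automaton (R : realType) (A B X : finType)
    (F : fuzzy_automaton R A X) (G : fuzzy_automaton R B X) : fuzzy_automaton R (A * B)%type X :=
  FuzzyAutomaton (prod_trans_range F G).

(* Main.v *)
Require Import Defs.
From HB Require Import structures.
From mathcomp Require Import all_boot all_order all_algebra.
From mathcomp Require Import reals.
Set Implicit Arguments. Unset Strict Implicit. Unset Printing Implicit Defensive.
Import Order.TTheory GRing.Theory Num.Theory.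
Local Open Scope ring_scope.

Section Aux.
Variable R : realType.

Lemma bigmax_pos_seq (I : eqType) (F : I -> R) (s : seq I) :
  0 < \big[Order.max/0]_(c <- s) F c <-> exists2 c, c \in s & 0 < F c.
Proof.
elim: s => [|x s IH]; first by rewrite big_nil ltxx; split => // [[]].
rewrite big_cons lt_max; split.
  case/orP => [h|/IH [c cs hc]]; first by exists x; rewrite ?mem_head.
  by exists c; rewrite // in_cons cs orbT.
case=> c; rewrite in_cons => /orP [/eqP -> -> //|cs hc].
by apply/orP; right; apply/IH; exists c.
Qed.

Lemma bigmax_pos (I : finType) (F : I -> R) :
  0 < \big[Order.max/0]_(c : I) F c <-> exists c, 0 < F c.
Proof.
rewrite bigmax_pos_seq; split; first by case=> c _ h; exists c.
by case=> c h; exists c; rewrite ?mem_index_enum.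
Qed.

Variables (A X : finType) (f : A -> X -> A -> R).

Lemma ext_nil a b : 0 < ext_trans_rev f a [::] b <-> a = b.
Proof.
rewrite /=; case: eqP => [->|]; split => //.
by rewrite ltxx.
Qed.

Lemma ext_cons a x rv b : 0 < ext_trans_rev f a (x :: rv) b <->
  exists c, 0 < ext_trans_rev f a rv c /\ 0 < f c x b.
Proof.
rewrite /= bigmax_pos; split; case=> c h; exists c.
  by move: h; rewrite lt_min => /andP.
by rewrite lt_min; apply/andP.
Qed.

Lemma ext_cat a ru c rv b : 0 < ext_trans_rev f a ru c ->
  0 < ext_trans_rev f c rv b -> 0 < ext_trans_rev f a (rv ++ ru) b.
Proof.
move=> h1; elim: rv b => [|x rv IH] b /=.
  by move/ext_nil => <-.
move/ext_cons => [d [h2 h3]]; apply/ext_cons; exists d; split => //.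
exact: IH.
Qed.

Lemma ext_ne (hc : complete f) a rv : exists b, 0 < ext_trans_rev f a rv b.
Proof.
elim: rv => [|x rv [b hb]]; first by exists a; apply/ext_nil.
have /set0Pn [b' hb'] := hc b x.
move: hb'; rewrite inE /ext_trans => /ext_cons [c [/ext_nil <- h]].
by exists b'; apply/ext_cons; exists b.
Qed.
End Aux.

Lemma ext_prod (R : realType) (A B X : finType) (F : fuzzy_automaton R A X)
  (G : fuzzy_automaton R B X) a b rw a' b' :
  0 < ext_trans_rev F a rw a' -> 0 < ext_trans_rev G b rw b' ->
  0 < ext_trans_rev (prod_automaton F G) (a, b) rw (a', b').
Proof.
elim: rw a' b' => [|x rw IH] a' b'.
  by move=> /ext_nil <- /ext_nil <-; apply/ext_nil.
move=> /ext_cons [c [h1 h2]] /ext_cons [d [h3 h4]].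
apply/ext_cons; exists (c, d); split; first exact: IH.
by rewrite /= /prod_trans lt_min h2 h4.
Qed.

Theorem proposition6p10 (R : realType) (A B X : finType)
  (a0 : A) (b0 : B) (x0 : X)
  (F : fuzzy_automaton R A X) (G : fuzzy_automaton R B X) :
  complete F -> complete G -> D3_directable F -> D3_directable G ->
  D3_directable (prod_automaton F G).
Proof.
move=> cF cG [u [c hu]] [v [d hv]].
have [c1 hc1] := ext_ne cF c (rev v).
exists (u ++ v), (c1, d) => -[a b].
rewrite inE /ext_trans rev_cat.
have [b1 hb1] := ext_ne cG b (rev u).
apply: (@ext_cat _ _ _ _ _ _ (c, b1)).
  by apply: ext_prod => //; move: (hu a); rewrite inE.
by apply: ext_prod => //; move: (hv b1); rewrite inE.
Qed.
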